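(* Let $\mathcal{X}$ be a finite set of $n$ agents and $\Gamma$ a merit distribution on $\mathbb{R}^{\mathcal{X}}$. Let $\pi^{TS}_\Gamma$ be the Thompson sampling ranking distribution: draw a merit vector $v\sim\Gamma$ and rank the agents by decreasing $v_x$. Then $\pi^{TS}_\Gamma$ is $1$-fair with respect to $\Gamma$.
   Context: A ranking of $\mathcal{X}$ is a bijection $\sigma:\{1,\dots,n\}\to\mathcal{X}$ ($\sigma(k)$ is the agent in position $k$); a ranking distribution $\pi$ is a probability distribution over rankings, with marginals $P_\pi(x,k)=\sum_{\sigma:\sigma(k)=x}\pi(\sigma)$. A merit distribution $\Gamma$ is a probability distribution over $v=(v_x)_{x\in\mathcal{X}}\in\mathbb{R}^{\mathcal{X}}$ such that every $v$ in its support has pairwise distinct entries. $\mathrm{Top}_k(x;v)$ denotes the event $|\{x': v_{x'}>v_x\}|<k$. For $\rho\in[0,1]$, $\pi$ is $\rho$-fair with respect to $\Gamma$ if $\sum_{k'=1}^{k}P_\pi(x,k')\ge\rho\cdot\Pr_{v\sim\Gamma}[\mathrm{Top}_k(x;v)]$ for all agents $x$ and positions $k$. *)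

(* Defs.v *)
From HB Require Import structures.
From mathcomp Require Import all_boot all_order all_algebra.
From mathcomp Require Import all_classical all_reals all_analysis.
Set Implicit Arguments. Unset Strict Implicit. Unset Printing Implicit Defensive.
Import Order.TTheory GRing.Theory Num.Theory.
Local Open Scope classical_set_scope.
Local Open Scope ring_scope.

(* Agents: a finite type X with n = #|X| elements.  Positions are 'I_#|X|,
   0-based: index k : 'I_#|X| stands for position k+1 of the paper. *)

(* A ranking: a bijection from positions to agents (injective map between
   sets of equal finite cardinality). *)
Definition ranking (X : finType) := {f : {ffun 'I_#|X| -> X} | injectiveb f}.

Definition is_ranking_dist (R : realType) (X : finType) (pi : ranking X -> R) :=
  (forall s, 0 <= pi s) /\ \sum_(s : ranking X) pi s = 1.

Definition marginal (R : realType) (X : finType) (pi : ranking X -> R)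
  (x : X) (k : 'I_#|X|) : R :=
  \sum_(s : ranking X | val s k == x) pi s.

(* Top_k(x; v) for the paper's position k+1 (k 0-based):
   |{x' : v_x' > v_x}| < k+1. *)
Definition Top (R : realType) (X : finType) (k : 'I_#|X|) (x : X) (w : X -> R) :=
  (#|[set x' | (w x < w x')%R]| < k.+1)%N.

Definition distinct_entries (R : realType) (X : finType) (w : X -> R) :=
  injective w.

(* The merit distribution Gamma is represented as the law of a random merit
   vector v : T -> (X -> R) on a probability space (T, P). *)

Definition ranks_by_decreasing (R : realType) (X : finType) (w : X -> R)
  (s : ranking X) :=
  forall i j : 'I_#|X|, (i < j)%N -> w (val s j) < w (val s i).

Definition thompson (R : realType) (d : measure_display) (T : measurableType d)
  (P : probability T R) (X : finType) (v : T -> X -> R) (s : ranking X) : R :=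
  fine (P [set om | ranks_by_decreasing (v om) s]).

Definition rho_fair (R : realType) (d : measure_display) (T : measurableType d)
  (P : probability T R) (X : finType) (v : T -> X -> R)
  (rho : R) (pi : ranking X -> R) :=
  forall (x : X) (k : 'I_#|X|),
    \sum_(k' < #|X| | (k' <= k)%N) marginal pi x k'
      >= rho * fine (P [set om | Top k x (v om)]).

(* Main.v *)
Require Import Defs.
From HB Require Import structures.
From mathcomp Require Import all_boot all_order all_algebra.
From mathcomp Require Import all_classical all_reals all_analysis.
Import Order.TTheory GRing.Theory Num.Theory.
Local Open Scope classical_set_scope.
Local Open Scope ring_scope.
Set Implicit Arguments. Unset Strict Implicit. Unset Printing Implicit Defensive.

Definition rk (R : realType) (X : finType) (w : X -> R) (x : X) : nat :=
  #|[set x' | w x < w x']%SET|.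

Lemma TopE (R : realType) (X : finType) k x (w : X -> R) :
  Top k x w = (rk w x < k.+1)%N.
Proof. rewrite /Top; congr (_ < _)%N; apply: eq_card => y.
rewrite inE; apply/idP/idP; [move/set_mem|move=> h; apply/mem_set]; done. Qed.

Lemma rk_lt (R : realType) (X : finType) (w : X -> R) x : (rk w x < #|X|)%N.
Proof.
rewrite /rk -cardsT; apply: proper_card; apply/properP; split.
  by apply/fintype.subsetP => y; rewrite !inE.
by exists x; rewrite !inE ?ltxx.
Qed.

Lemma rk_ltlt (R : realType) (X : finType) (w : X -> R) x y :
  w x < w y -> (rk w y < rk w x)%N.
Proof.
move=> lt; apply: proper_card; apply/properP; split.
  by apply/fintype.subsetP => z; rewrite !inE; apply: lt_trans.
by exists y; rewrite !inE ?lt ?ltxx.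
Qed.

Lemma rk_inj (R : realType) (X : finType) (w : X -> R) :
  injective w -> injective (rk w).
Proof.
move=> wi x y E; apply: wi; case: (ltgtP (w x) (w y)) => // H.
  by have := rk_ltlt H; rewrite E ltnn.
by have := rk_ltlt H; rewrite E ltnn.
Qed.

Lemma ranking_onto (X : finType) (s : ranking X) y : exists i, val s i = y.
Proof.
have inj : injective (val s) by apply/injectiveP; exact: (valP s).
have := inj_card_onto inj _ y; rewrite card_ord => /(_ (leqnn _)) /codomP [i ->].
by exists i.
Qed.

Lemma rk_dec (R : realType) (X : finType) (w : X -> R) (s : ranking X) i :
  ranks_by_decreasing w s -> rk w (val s i) = i.
Proof.
move=> H; have inj : injective (val s) by apply/injectiveP; exact: (valP s).
rewrite /rk; have -> : [set x' | w (val s i) < w x']%SET =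
          ((val s) @: (@widen_ord i #|X| (ltnW (ltn_ord i)) @: [set: 'I_i]))%SET.
  apply/setP => y; rewrite inE; have [j <-] := ranking_onto s y.
  rewrite mem_imset //; apply/idP/idP.
    move=> lt; case: (ltngtP j i) => ji.
    - by apply/imsetP; exists (Ordinal ji) => //; apply: val_inj.
    - by have := H _ _ ji; rewrite ltNge le_eqVlt lt orbT.
    - by move: lt; rewrite (val_inj ji) ltxx.
  by case/imsetP => j' _ ->; apply: H => /=.
by rewrite card_imset // card_imset ?cardsT ?card_ord //; by move=> a b /(congr1 val) /= ?; apply: val_inj.
Qed.

Lemma exists_rank (R : realType) (X : finType) (w : X -> R) :
  injective w -> exists s : ranking X, ranks_by_decreasing w s.
Proof.
move=> wi; pose p (x : X) : 'I_#|X| := Ordinal (rk_lt w x).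
have pinj : injective p by move=> x y /(congr1 val) /= /(rk_inj wi).
have [g pg gp] : bijective p by apply: (inj_card_bij pinj); rewrite card_ord.
have ginj : injective g by exact: can_inj gp.
have fi : injectiveb [ffun i => g i] by apply/injectiveP => i j; rewrite !ffunE; exact: ginj.
exists (exist (fun f : {ffun 'I_#|X| -> X} => injectiveb f) _ fi) => i j ij /=; rewrite !ffunE.
case: (ltgtP (w (g j)) (w (g i))) => // H.
  have := rk_ltlt H; have := congr1 val (gp i); have := congr1 val (gp j).
  by rewrite /= => -> ->; rewrite ltnNge (ltnW ij).
by move/wi: H => /ginj /(congr1 val) /eqP; rewrite eq_sym (ltn_eqF ij).
Qed.

Lemma rank_unique (R : realType) (X : finType) (w : X -> R) (s s' : ranking X) :
  injective w -> ranks_by_decreasing w s -> ranks_by_decreasing w s' -> s = s'.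
Proof.
move=> wi H H'; apply: val_inj; apply/ffunP => i.
apply: (rk_inj wi); by rewrite (rk_dec i H) (rk_dec i H').
Qed.

Lemma bigsetU_mem (T : Type) (I : eqType) (r : seq I) (A : pred I) (F : I -> set T) t :
  (\big[setU/set0]_(i <- r | A i) F i) t <-> exists i, i \in r /\ A i /\ F i t.
Proof.
elim: r => [|a r IH]; first by rewrite big_nil; split; [case | case=> i []].
rewrite big_cons; case: ifP => Aa.
  split.
    case => [Fa|/IH [i [? [? ?]]]]; first by exists a; rewrite mem_head.
    by exists i; rewrite in_cons orbC; split => //; apply/orP; left.
  case=> i; rewrite in_cons => -[/orP [/eqP ->|ir] [Ai Fi]]; first by left.
  by right; apply/IH; exists i.
rewrite IH; split; case=> i [ir [Ai Fi]]; exists i => //.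
  by rewrite in_cons ir orbT.
move: ir; rewrite in_cons => /orP [/eqP ai|//].
by move: Aa; rewrite -ai Ai.
Qed.

Lemma measure_seq_add d (T : measurableType d) (R : realType)
  (mu : {measure set T -> \bar R}) (I : eqType) (r : seq I) (A : pred I)
  (F : I -> set T) :
  uniq r -> (forall i, measurable (F i)) ->
  (forall i j, i != j -> F i `&` F j = set0) ->
  mu (\big[setU/set0]_(i <- r | A i) F i) = (\sum_(i <- r | A i) mu (F i))%E.
Proof.
move=> + mF dF; elim: r => [|a r IH]; first by rewrite !big_nil measure0.
rewrite /= => /andP [ar ur]; rewrite !big_cons; case: ifP => _; last exact: IH ur.
rewrite measureU //; first by congr (_ + _)%E; apply: IH.
  by apply: bigsetU_measurable.
apply/seteqP; split => // t [Fa /bigsetU_mem [i [ir [_ Fi]]]].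
have ai : a != i by apply: contraNneq ar => ->.
by rewrite -(dF _ _ ai).
Qed.

Theorem proposition3 (R : realType) (d : measure_display) (T : measurableType d)
  (P : probability T R) (X : finType) (v : T -> X -> R)
  (v_meas : forall x : X, measurable_fun setT (fun om => v om x))
  (v_distinct : forall om : T, distinct_entries (v om)) :
  is_ranking_dist (thompson P v) /\ rho_fair P v 1 (thompson P v).
Proof.
pose E (s : ranking X) := [set om | ranks_by_decreasing (v om) s].
have mE : forall s, measurable (E s).
  move=> s.
  have -> : E s = \bigcap_(p in [set p : 'I_#|X| * 'I_#|X| | (p.1 < p.2)%N])
                    [set om | v om (val s p.2) < v om (val s p.1)].
    apply/seteqP; split => om /=.
      by move=> H [i j] /= ij; apply: H.
    by move=> H i j ij; apply: (H (i, j)).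
  apply: fin_bigcap_measurable; first exact: finite_finset.
  move=> [i j] _ /=.
  have := measurable_realfun.measurable_fun_ltr (v_meas (val s j)) (v_meas (val s i)) measurableT
    (_ : measurable [set true]).
  have -> : [set om | v om (val s j) < v om (val s i)] =
    setT `&` (fun om => v om (val s j) < v om (val s i)) @^-1` [set true].
    by apply/seteqP; split => om //= -[].
  apply; done.
have thE s : (thompson P v s)%:E = P (E s).
  by rewrite /thompson fineK //; apply: fin_num_measure; exact: mE.
have th0 s : 0 <= thompson P v s by rewrite /thompson fine_ge0.
have dE s s' : s != s' -> E s `&` E s' = set0.
  move=> ne; apply/seteqP; split => // om [H H'].
  by apply/(negP ne)/eqP; exact: rank_unique (v_distinct om) H H'.
split; first split.
- exact: th0.
- apply: EFin_inj; rewrite -sumEFin (eq_bigr _ (fun s _ => thE s)).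
  rewrite -(@measure_seq_add _ _ _ P _ _ xpredT) //; last exact: index_enum_uniq.
  rewrite -(probability_setT P); congr (P _); apply/seteqP; split => // om _.
  apply/bigsetU_mem; have [s Hs] := exists_rank (v_distinct om).
  by exists s; split; [exact: mem_index_enum|].
move=> x k; rewrite mul1r.
pose S (s : ranking X) := [exists k' : 'I_#|X|, (k' <= k)%N && (val s k' == x)].
have topE : [set om | Top k x (v om)] =
    \big[setU/set0]_(s <- index_enum (ranking X) | S s) E s.
  apply/seteqP; split => om.
    rewrite /= TopE => Ht; have [s Hs] := exists_rank (v_distinct om).
    apply/bigsetU_mem; exists s; split; first exact: mem_index_enum.
    split => //.
    have [i si] := ranking_onto s x; apply/existsP; exists i; rewrite si eqxx andbT.
    by move: Ht; rewrite -si (rk_dec i Hs).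
  move/bigsetU_mem => [s [_ [/existsP [i /andP [ik /eqP si]] Hs]]].
  by rewrite /= TopE -si (rk_dec i Hs) ltnS.
have -> : fine (P [set om | Top k x (v om)]) = \sum_(s | S s) thompson P v s.
  apply: EFin_inj; rewrite fineK; last first.
    by rewrite fin_num_measure // topE; apply: bigsetU_measurable.
  rewrite topE measure_seq_add //; last exact: index_enum_uniq.
  by rewrite -sumEFin; apply: eq_bigr => s _; rewrite thE.
rewrite /marginal (exchange_big_dep xpredT) //=.
rewrite [X in X <= _]big_mkcond /=.
apply: ler_sum => s _; case: ifP => Ss; last by apply: sumr_ge0 => i _.
case/existsP: Ss => i /andP [ik si].
rewrite (bigD1 i) /=; last by rewrite ik si.
by rewrite lerDl; apply: sumr_ge0 => *.
Qed.
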